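(* Let $m,n\ge0$, $0\le k\le\min(m,n)$, and let $i,j$ be integers with $0\le i\le m$, $0\le j\le n$, $k\le i+j\le m+n-k$. Then $$\binom{m+n-k}{i,\ j,\ m+n-k-i-j}\,c_{m,n,k}(m-i,\,n-j)=(-1)^k\binom{m+n-k}{m-i,\ n-j,\ i+j-k}\,c_{m,n,k}(i,j).$$
   Context: Multinomial coefficients: $\binom{a+b+c}{a,\ b,\ c}=\frac{(a+b+c)!}{a!\,b!\,c!}$ for nonnegative $a,b,c$. Let $e,f,h$ be the standard basis of $\mathfrak{sl}(2,\mathbb{C})$. $V(n)$ is the irreducible representation of highest weight $n$ with fixed highest weight vector $\phi_n$; $\{f^i\phi_n\}_{0\le i\le n}$ is a basis, $f^{n+1}\phi_n=0$. $\mathfrak{sl}(2)$ acts on $V(m)\otimes V(n)$ by $X(v\otimes w)=Xv\otimes w+v\otimes Xw$. For any $m,n\ge 0$ and $0\le k\le\min(m,n)$, $\phi_{m,n,k}=\sum_{l=0}^{k}(-1)^l\binom{m-l}{k-l}\binom{n-k+l}{l} f^l\phi_m\otimes f^{k-l}\phi_n\in V(m)\otimes V(n)$ (a highest weight vector of weight $m+n-2k$). The coordinates $c_{m,n,k}(i,j)$ are defined by $f^{p-k}\phi_{m,n,k}=\sum_{i+j=p,\,0\le i\le m,\,0\le j\le n} c_{m,n,k}(i,j)\, f^i\phi_m\otimes f^j\phi_n$ for $k\le p\le m+n-k$. *)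

(* Defs.v *)
From HB Require Import structures.
From mathcomp Require Import all_boot all_order all_algebra.
Set Implicit Arguments. Unset Strict Implicit. Unset Printing Implicit Defensive.
Import Order.TTheory GRing.Theory Num.Theory.

Definition multinom (a b c : nat) : nat :=
  ((a + b + c)`! %/ (a`! * b`! * c`!))%N.

(* An element of V(m) (x) V(n) is represented by its coordinates v i j on the
   basis f^i phi_m (x) f^j phi_n, 0 <= i <= m, 0 <= j <= n; coordinates outside
   this range are 0 (convention).  Coefficients are integers (everything here
   is defined over Z, a subring of C). *)
Definition tensor := nat -> nat -> int.

(* Action of f on V(m) (x) V(n): f(f^i phi_m (x) f^j phi_n)
   = f^(i+1) phi_m (x) f^j phi_n + f^i phi_m (x) f^(j+1) phi_n,
   with f^(m+1) phi_m = 0 and f^(n+1) phi_n = 0. *)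
Definition fact_tensor (m n : nat) (v : tensor) : tensor :=
  fun i j =>
    if (i <= m)%N && (j <= n)%N then
      ((if (0 < i)%N then v i.-1 j else 0) + (if (0 < j)%N then v i j.-1 else 0))%R
    else 0%R.

(* phi_{m,n,k} = sum_{l=0}^k (-1)^l C(m-l,k-l) C(n-k+l,l) f^l phi_m (x) f^(k-l) phi_n *)
Definition phi_mnk (m n k : nat) : tensor :=
  fun i j =>
    if [&& (i + j == k)%N, (i <= k)%N, (i <= m)%N & (j <= n)%N] then
      ((-1) ^+ i * ('C(m - i, k - i) * 'C(n - k + i, i))%:R)%R
    else 0%R.

(* c_{m,n,k}(i,j): coefficient of f^i phi_m (x) f^j phi_n in f^(p-k) phi_{m,n,k},
   with p = i + j. *)
Definition c_mnk (m n k i j : nat) : int :=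
  iter (i + j - k) (fact_tensor m n) (phi_mnk m n k) i j.

(* Main.v *)
Require Import Defs.
From HB Require Import structures.
From mathcomp Require Import all_boot all_order all_algebra.
From mathcomp Require Import zify ring lra.
Import Order.TTheory GRing.Theory Num.Theory.
Local Open Scope ring_scope.

Definition bz (M : nat) (z : int) : int :=
  match z with Posz u => ('C(M, u))%:R | Negz _ => 0 end.

Lemma bz_neg M (z : int) : z < 0 -> bz M z = 0.
Proof. by case: z. Qed.

Lemma bz_big M (z : int) : (M%:Z < z) -> bz M z = 0.
Proof. case: z => //= u Hu; rewrite bin_small //; by rewrite -ltz_nat. Qed.

Lemma bzS M (u : int) : u * bz M u = (M%:Z - u + 1) * bz M (u - 1).
Proof.
case: u => [[|u]|u].
- by rewrite mul0r bz_neg ?mulr0.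
- have -> : (Posz u.+1 - 1) = Posz u by rewrite -addn1 PoszD addrK.
  rewrite /=. have H := mul_bin_left M u.
  have [le|lt] := leqP u M.
    rewrite !natz; nia.
  rewrite (bin_small lt) bin_small ?mulr0 //; lia.
- by rewrite /= !mulr0.
Qed.

Lemma bz_sym M (z : int) : bz M z = bz M (M%:Z - z).
Proof.
have [zlt|zge] := ltP z 0.
  rewrite bz_neg // bz_big //; lia.
have [Mlt|Mge] := ltP M%:Z z.
  rewrite bz_big // bz_neg //; lia.
case: z zge Mge => [u|u] //= _ Hu.
have -> : M%:Z - u%:Z = (M - u)%N%:Z by lia.
by rewrite /= bin_sub // -lez_nat.
Qed.

Definition T (m n k : nat) (x y : int) : int :=
  \sum_(0 <= r < k.+1) (-1) ^+ r * ('C(k, r))%:R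
     * bz (m - k) (x - r%:Z) * bz (n - k) (y + r%:Z - k%:Z).

Definition gT (m n k : nat) (x y : int) (r : nat) : int :=
  (-1) ^+ r * r%:R * ('C(k, r))%:R
     * bz (m - k) (x - r%:Z) * bz (n - k) (y + r%:Z - 1 - k%:Z).

Lemma T_rec (m n k : nat) (x y : int) : (k <= m)%N -> (k <= n)%N ->
  (m%:Z - x + 1) * T m n k (x - 1) y + (n%:Z - y + 1) * T m n k x (y - 1)
  - (x + y - k%:Z) * T m n k x y = 0.
Proof.
move=> km kn.
rewrite /T !mulr_sumr -big_split -sumrB /=.
rewrite (telescope_sumr_eq (fun r => - gT m n k x y r) _ (leq0n k.+1)).
  by rewrite /gT bin_small // !(mulr0, mul0r) oppr0 subr0.
move=> r /andP[_ Hr].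
rewrite /gT.
set M := (m - k)%N. set N := (n - k)%N.
set u := x - r%:Z. set v := y + r%:Z - k%:Z.
have e1 : x - 1 - r%:Z = u - 1 by rewrite /u; ring.
have e2 : y - 1 + r%:Z - k%:Z = v - 1 by rewrite /v; ring.
have e3 : x - (r.+1)%:Z = u - 1 by rewrite /u -addn1 PoszD; ring.
have e4 : y + (r.+1)%:Z - 1 - k%:Z = v by rewrite /v -addn1 PoszD; ring.
have e5 : y + r%:Z - 1 - k%:Z = v - 1 by rewrite /v; ring.
rewrite e1 e2 e3 e4 e5.
have hA := bzS M u. have hB := bzS N v.
have hC : (r.+1 * 'C(k, r.+1))%N = ((k - r) * 'C(k, r))%N by rewrite mul_bin_left.
have hC' : (r.+1)%:R * ('C(k, r.+1))%:R = (k%:Z - r%:Z) * ('C(k, r))%:R :> int.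
  rewrite -natrM hC natrM; congr (_ * _); lia.
have hM : m%:Z = M%:Z + k%:Z by rewrite /M; lia.
have hN : n%:Z = N%:Z + k%:Z by rewrite /N; lia.
have hx : x = u + r%:Z by rewrite /u; ring.
have hy : y = v - r%:Z + k%:Z by rewrite /v; ring.
have hs : (-1) ^+ r.+1 = - ((-1) ^+ r) :> int by rewrite exprS mulN1r.
rewrite hs.
set A := bz M u. set A' := bz M (u - 1). set B := bz N v. set B' := bz N (v - 1).
set c := ('C(k, r))%:R : int. set c' := ('C(k, r.+1))%:R : int. set s := (-1) ^+ r : int.
rewrite hM hN hx hy.
apply/eqP; rewrite -subr_eq0; apply/eqP.
transitivity (s * B * (u * A - (M%:Z - u + 1) * A') * c * (-1)
   + s * A * (v * B - (N%:Z - v + 1) * B') * c * (-1)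
   + s * A' * B * ((r.+1)%:R * c' - (k%:Z - r%:Z) * c) * (-1)).
  rewrite -natr1. ring.
by rewrite hA hB hC' !subrr !mulr0 !mul0r !addr0.
Qed.

Lemma T_neg (m n k : nat) (x y : int) : x < 0 -> T m n k x y = 0.
Proof.
move=> hx; rewrite /T big1_seq // => r _.
rewrite (bz_neg (m - k) (x - r%:Z)) ?mulr0 ?mul0r //; lia.
Qed.

Lemma T_negy (m n k : nat) (x y : int) : y < 0 -> T m n k x y = 0.
Proof.
move=> hy; rewrite /T big_nat big1 // => r /andP[_ Hr].
rewrite (bz_neg (n - k) (y + r%:Z - k%:Z)) ?mulr0 //; lia.
Qed.

Lemma T_base (m n k i : nat) : (i <= k)%N ->
  T m n k i%:Z (k - i)%N%:Z = (-1) ^+ i * ('C(k, i))%:R.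
Proof.
move=> ik; rewrite /T big_mkord.
have Hi : (i < k.+1)%N by [].
rewrite (bigD1 (Ordinal Hi)) //= big1 ?addr0.
  have -> : i%:Z - i%:Z = 0 by ring.
  have -> : (k - i)%N%:Z + i%:Z - k%:Z = 0 by lia.
  by rewrite /= !bin0 !mulr1.
move=> r /eqP Hr.
have [lt|gt] := ltnP r i.
  rewrite (bz_neg (n - k) ((k - i)%N%:Z + r%:Z - k%:Z)) ?mulr0 //; lia.
have gt' : (i < r)%N.
  rewrite ltn_neqAle gt andbT; apply/eqP => E; apply: Hr; apply: val_inj; by rewrite /= E.
rewrite (bz_neg (m - k) (i%:Z - r%:Z)) ?mulr0 ?mul0r //; lia.
Qed.

Lemma T_sym (m n k : nat) (x y : int) : (k <= m)%N -> (k <= n)%N ->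
  T m n k (m%:Z - x) (n%:Z - y) = (-1) ^+ k * T m n k x y.
Proof.
move=> km kn; rewrite /T mulr_sumr big_nat_rev /=.
apply: eq_big_nat => r /andP[_ Hr].
have Hr' : (r <= k)%N by [].
rewrite add0n subSS.
have e1 : bz (m - k) (m%:Z - x - (k - r)%N%:Z) = bz (m - k) (x - r%:Z).
  rewrite bz_sym; congr bz; lia.
have e2 : bz (n - k) (n%:Z - y + (k - r)%N%:Z - k%:Z) = bz (n - k) (y + r%:Z - k%:Z).
  rewrite bz_sym; congr bz; lia.
rewrite e1 e2 bin_sub //.
have hk : (-1) ^+ k = (-1) ^+ (k - r) * (-1) ^+ r :> int by rewrite -exprD subnK.
have hsq : (-1) ^+ r * (-1) ^+ r = 1 :> int.
  by rewrite -exprMn mulrNN mulr1 expr1n.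
rewrite hk.
set s' := (-1) ^+ (k - r) : int. set s := (-1) ^+ r : int.
set c := ('C(k, r))%:R : int. set A := bz _ _. set B := bz _ _.
transitivity (s' * (s * s) * c * A * B); first by rewrite hsq mulr1.
ring.
Qed.

Lemma c_base (m n k i j : nat) : (k <= m)%N -> (k <= n)%N -> (i <= m)%N -> (j <= n)%N ->
  (i + j = k)%N ->
  c_mnk m n k i j * ((m - k)`! * (n - k)`! * k`!)%N%:R
  = ((0`! * (m - i)`! * (n - j)`!)%N)%:R * T m n k i j.
Proof.
move=> km kn im jn ijk.
have ik : (i <= k)%N by rewrite -ijk leq_addr.
have hj : j = (k - i)%N by rewrite -ijk addKn.
rewrite /c_mnk ijk subnn /= /phi_mnk ijk eqxx ik im jn /= hj T_base //.
suff H : ('C(m - i, k - i) * 'C(n - k + i, i) * ((m - k)`! * (n - k)`! * k`!)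
   = (0`! * (m - i)`! * (n - (k - i))`!) * 'C(k, i))%N.
  by rewrite -mulrA -natrM H natrM; ring.
apply/eqP; rewrite -(eqn_pmul2r (fact_gt0 i)) -(eqn_pmul2r (fact_gt0 (k - i))); apply/eqP.
have e1 : ('C(m - i, k - i) * ((k - i)`! * (m - k)`!) = (m - i)`!)%N.
  have -> : (m - k = (m - i) - (k - i))%N by lia.
  by rewrite bin_fact // leq_sub2r.
have e2 : ('C(n - k + i, i) * (i`! * (n - k)`!) = (n - k + i)`!)%N.
  have {2}-> : (n - k = (n - k + i) - i)%N by lia.
  by rewrite bin_fact // leq_addl.
have e3 := bin_fact ik.
have -> : (n - (k - i) = n - k + i)%N by lia.
rewrite fact0 mul1n.
transitivity ('C(m - i, k - i) * ((k - i)`! * (m - k)`!) * ('C(n - k + i, i) * (i`! * (n - k)`!)) * k`!)%N.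
  ring.
rewrite e1 e2 -e3. ring.
Qed.

Lemma c_iter (m n k i j a : nat) : (i + j = k + a.+1)%N ->
  c_mnk m n k i j = fact_tensor m n (iter a (fact_tensor m n) (phi_mnk m n k)) i j.
Proof. by move=> h; rewrite /c_mnk h addKn. Qed.

Lemma c_at (m n k i j a : nat) : (i + j = k + a)%N ->
  iter a (fact_tensor m n) (phi_mnk m n k) i j = c_mnk m n k i j.
Proof. by move=> h; rewrite /c_mnk h addKn. Qed.

Lemma c_closed (m n k : nat) : (k <= m)%N -> (k <= n)%N -> forall a i j,
  (i <= m)%N -> (j <= n)%N -> (i + j = k + a)%N ->
  c_mnk m n k i j * ((m - k)`! * (n - k)`! * k`!)%N%:R
  = ((a`! * (m - i)`! * (n - j)`!)%N)%:R * T m n k i j.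
Proof.
move=> km kn; elim=> [|a IH] i j im jn h.
  by apply: c_base => //; rewrite h addn0.
set K := ((m - k)`! * (n - k)`! * k`!)%N.
have hi : (if (0 < i)%N then iter a (fact_tensor m n) (phi_mnk m n k) i.-1 j else 0) * K%:R
   = (a`! * (m - i)`! * (n - j)`!)%N%:R * ((m%:Z - i%:Z + 1) * T m n k (i%:Z - 1) j).
  case: i im h => [|i] im h /=.
    by rewrite mul0r T_neg ?mulr0.
  rewrite (@c_at m n k _ _ a); last by rewrite addSn in h; lia.
  rewrite (IH i j); [| lia.. ].
  have -> : (i.+1%:Z - 1) = i%:Z by lia.
  have -> : (m - i = (m - i.+1).+1)%N by lia.
  rewrite factS.
  have -> : m%:Z - i.+1%:Z + 1 = (m - i.+1).+1%:R by lia.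
  rewrite !natrM; ring.
have hj : (if (0 < j)%N then iter a (fact_tensor m n) (phi_mnk m n k) i j.-1 else 0) * K%:R
   = (a`! * (m - i)`! * (n - j)`!)%N%:R * ((n%:Z - j%:Z + 1) * T m n k i (j%:Z - 1)).
  move: hi; case: j jn h => [|j] jn h _ /=.
    by rewrite mul0r T_negy ?mulr0.
  rewrite (@c_at m n k _ _ a); last by rewrite addnS in h; lia.
  rewrite (IH i j); [| lia.. ].
  have -> : (j.+1%:Z - 1) = j%:Z by lia.
  have -> : (n - j = (n - j.+1).+1)%N by lia.
  rewrite factS.
  have -> : n%:Z - j.+1%:Z + 1 = (n - j.+1).+1%:R by lia.
  rewrite !natrM; ring.
rewrite (@c_iter m n k _ _ a) // /fact_tensor im jn /= mulrDl hi hj -mulrDr.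
have := T_rec m n k i j km kn.
move/eqP; rewrite subr_eq0 => /eqP ->.
have -> : i%:Z + j%:Z - k%:Z = a.+1%:R by lia.
by rewrite factS !natrM; ring.
Qed.

Lemma multinomE (a b c : nat) :
  (multinom a b c * (a`! * b`! * c`!))%N = (a + b + c)`!.
Proof.
have e1 : (a + b + c)`! = ('C(a + b + c, a) * 'C(b + c, b) * (a`! * b`! * c`!))%N.
  have f1 := bin_fact (leq_addr (b + c) a). rewrite addKn in f1.
  have f2 := bin_fact (leq_addr c b). rewrite addKn in f2.
  rewrite -addnA -f1 -f2. ring.
by rewrite /multinom e1 mulnK // !muln_gt0 !fact_gt0.
Qed.

Theorem proposition8p4 (m n k i j : nat) :
  (k <= minn m n)%N -> (i <= m)%N -> (j <= n)%N ->
  (k <= i + j)%N -> (i + j <= m + n - k)%N ->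
  ((multinom i j (m + n - k - i - j))%:R * c_mnk m n k (m - i) (n - j)
   = (-1) ^+ k * (multinom (m - i) (n - j) (i + j - k))%:R * c_mnk m n k i j
   :> int)%R.
Proof.
rewrite leq_min => /andP[km kn] im jn h1 h2.
set K := ((m - k)`! * (n - k)`! * k`!)%N.
have K0 : (K%:R : int) != 0 by rewrite pnatr_eq0 -lt0n !muln_gt0 !fact_gt0.
apply: (mulIf K0).
rewrite -!mulrA.
rewrite (@c_closed m n k km kn (m + n - k - i - j) (m - i) (n - j)); [| lia..].
rewrite (@c_closed m n k km kn (i + j - k) i j); [| lia..].
have -> : (m - (m - i) = i)%N by lia.
have -> : (n - (n - j) = j)%N by lia.
rewrite !mulrA -!natrM -[_ * _%:R * _%:R]mulrA -natrM.
have -> : (multinom i j (m + n - k - i - j) * ((m + n - k - i - j)`! * i`! * j`!))%N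
   = (m + n - k)`!.
  transitivity ((i + j + (m + n - k - i - j))`!); last by congr (_`!); lia.
  rewrite -multinomE; ring.
have -> : (multinom (m - i) (n - j) (i + j - k) * ((i + j - k)`! * (m - i)`! * (n - j)`!))%N
   = (m + n - k)`!.
  transitivity (((m - i) + (n - j) + (i + j - k))`!); last by congr (_`!); lia.
  rewrite -multinomE; ring.
have -> : Posz (m - i) = m%:Z - i%:Z by lia.
have -> : Posz (n - j) = n%:Z - j%:Z by lia.
rewrite T_sym //. ring.
Qed.
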